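(* Let $R$ be a ring, $M$ an $R$-module of finite length, and $S:=R(+)M$ the idealization of $M$. Let $\{S_i\}_{i=0}^n$ be the Loewy series of the ring extension $R\subseteq S$. Then $S_i=R(+)M_i$ for each $i\in\{0,\ldots,n\}$, where $\{M_i\}$ is the Loewy series of the lattice $\Lambda(M)$ of $R$-submodules of $M$. In particular $\pounds[R,S]=\lambda(M)$.
   Context: All rings are commutative with identity. The idealization $R(+)M$ is $R\times M$ with componentwise addition and multiplication $(r,m)(s,n)=(rs,rn+sm)$; $R$ is identified with $\{(r,0)\}$ and for a submodule $N$ of $M$, $R(+)N$ is a subring. For a ring extension $A\subseteq B$, $[A,B]$ is the lattice of $A$-subalgebras; $T\subset U$ minimal means $[T,U]=\{T,U\}$; atoms of $[A,B]$ are $C$ with $A\subset C$ minimal; the socle $\mathcal S[A,B]$ is the product of all atoms. Loewy series of $A\subseteq B$: $S_0=A$, $S_{i+1}=\mathcal S[S_i,B]$ while $S_i\neq B$; $\pounds[A,B]$ is the least $n$ with $S_n=B$. The Loewy series of $\Lambda(M)$ is $M_0=0$, $M_{i+1}=$ the sum of all submodules $N\supseteq M_i$ with $N/M_i$ simple, while $M_i\neq M$; $\lambda(M)$ is the least $n$ with $M_n=M$. *)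

(* Defs.v *)
From mathcomp Require Import all_boot all_algebra.
Set Implicit Arguments. Unset Strict Implicit. Unset Printing Implicit Defensive.
Import GRing.Theory.
Local Open Scope ring_scope.

Definition pset (T : Type) := T -> Prop.
Definition psub T (A B : pset T) := forall x, A x -> B x.
Definition peq T (A B : pset T) := forall x, A x <-> B x.
Definition pproper T (A B : pset T) := psub A B /\ ~ peq A B.

Section Idealization.
Variables (R : comPzRingType) (M : lmodType R).

Definition submod (N : pset M) :=
  [/\ N 0, (forall x y, N x -> N y -> N (x + y)) &
      (forall (r : R) x, N x -> N (r *: x))].

(* N / L is a simple module (L, N submodules with L <= N). *)
Definition simple_quot (L N : pset M) :=
  pproper L N /\
  forall P, submod P -> psub L P -> psub P N -> peq P L \/ peq P N.

Definition finite_length :=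
  exists (k : nat) (N : nat -> pset M),
    [/\ peq (N 0%N) (fun x => x = 0), peq (N k) (fun _ => True),
        (forall j, submod (N j)) &
        (forall j, (j < k)%N -> simple_quot (N j) (N j.+1))].

(* Sum of all submodules N containing L with N/L simple (the empty sum,
   i.e. L itself, when there are none): the smallest submodule containing
   L and all such N. *)
Definition mod_loewy_step (L : pset M) : pset M :=
  fun x => forall P, submod P -> psub L P ->
    (forall N, submod N -> psub L N -> simple_quot L N -> psub N P) -> P x.

Fixpoint mod_loewy (i : nat) : pset M :=
  match i with
  | 0%N => fun x => x = 0
  | i'.+1 => mod_loewy_step (mod_loewy i')
  end.

Definition iadd (x y : R * M) : R * M := (x.1 + y.1, x.2 + y.2).
Definition iopp (x : R * M) : R * M := (- x.1, - x.2).
Definition imul (x y : R * M) : R * M := (x.1 * y.1, x.1 *: y.2 + y.1 *: x.2).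

Definition Rimg : pset (R * M) := fun x => x.2 = 0.
Definition ideal_sub (N : pset M) : pset (R * M) := fun x => N x.2.

Definition subalg (T : pset (R * M)) :=
  [/\ psub Rimg T,
      (forall x y, T x -> T y -> T (iadd x y)),
      (forall x, T x -> T (iopp x)) &
      (forall x y, T x -> T y -> T (imul x y))].

Definition minimal_ext (T U : pset (R * M)) :=
  pproper T U /\
  forall C, subalg C -> psub T C -> psub C U -> peq C T \/ peq C U.

Definition atom (T C : pset (R * M)) := subalg C /\ minimal_ext T C.

(* socle of [T,S]: the product (compositum) of all atoms of [T,S], i.e. the
   smallest subalgebra containing all of them (T itself if there is none). *)
Definition socle (T : pset (R * M)) : pset (R * M) :=
  fun x => forall C, subalg C -> psub T C ->
    (forall A, atom T A -> psub A C) -> C x.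

Fixpoint ring_loewy (i : nat) : pset (R * M) :=
  match i with
  | 0%N => Rimg
  | i'.+1 => socle (ring_loewy i')
  end.

End Idealization.

(* Main.v *)
Require Import Defs.
From mathcomp Require Import all_boot all_algebra.
From Stdlib Require Import Classical FunctionalExtensionality PropExtensionality.
Set Implicit Arguments. Unset Strict Implicit. Unset Printing Implicit Defensive.
Import GRing.Theory.
Local Open Scope ring_scope.

Lemma peq_eq (T : Type) (A B : pset T) : peq A B -> A = B.
Proof.
move=> h; apply: functional_extensionality => x.
exact: propositional_extensionality (h x).
Qed.

Lemma least_aux (P : nat -> Prop) n : forall m, (m <= n)%N -> P m ->
  exists m', P m' /\ forall k, (k < m')%N -> ~ P k.
Proof.
elim: n => [|n IH] m hm Pm.
  move: hm; rewrite leqn0 => /eqP em; subst m.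
  by exists 0%N; split => // k.
case: (classic (exists k, (k < m)%N /\ P k)) => [[k [km Pk]]|h].
  apply: (IH k) => //.
  by rewrite -ltnS (leq_trans km hm).
exists m; split=> // k km Pk; by apply: h; exists k.
Qed.

Section Proof.
Variables (R : comPzRingType) (M : lmodType R).
Implicit Types (L N P : pset M) (C : pset (R * M)).

Lemma subalg_ideal N : submod N -> subalg (ideal_sub N).
Proof.
case=> h0 hD hZ; split.
- by move=> x; rewrite /Rimg /ideal_sub => ->.
- by move=> x y hx hy; apply: hD.
- by move=> x hx; rewrite /ideal_sub /iopp /= -scaleN1r; apply: hZ.
- by move=> x y hx hy; rewrite /ideal_sub /imul /=; apply: hD; apply: hZ.
Qed.

Definition Nof C : pset M := fun m => C (0, m).

Lemma subalg_Nof C : subalg C -> submod (Nof C).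
Proof.
case=> hR hD hN hM; split.
- by apply: hR.
- by move=> x y hx hy; have := hD _ _ hx hy; rewrite /iadd /= addr0.
- move=> r x hx; have hr : C (r, 0) by apply: hR.
  by have := hM _ _ hr hx; rewrite /imul /= mulr0 scale0r addr0.
Qed.

Lemma subalg_eq C : subalg C -> C = ideal_sub (Nof C).
Proof.
move=> sC; case: (sC) => hR hD hN hM.
apply: peq_eq => -[a m]; rewrite /ideal_sub /Nof /=; split => h.
- have hr : C (a, 0) by apply: hR.
  by have := hD _ _ (hN _ hr) h; rewrite /iadd /iopp /= addNr oppr0 add0r.
- have hr : C (a, 0) by apply: hR.
  by have := hD _ _ hr h; rewrite /iadd /= addr0 add0r.
Qed.

Lemma psub_ideal L N : psub (@ideal_sub R M L) (ideal_sub N) <-> psub L N.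
Proof. by split=> h x hx; [exact: (h (0, x)) | exact: h]. Qed.

Lemma peq_ideal L N : peq (@ideal_sub R M L) (ideal_sub N) <-> peq L N.
Proof. by split=> h x; [exact: (h (0, x)) | exact: h]. Qed.

Lemma minimal_ideal L N :
  minimal_ext (@ideal_sub R M L) (ideal_sub N) <-> simple_quot L N.
Proof.
split.
- case=> [[sub nq] mn]; split.
    split; first by apply/psub_ideal.
    by move=> h; apply: nq; apply/peq_ideal.
  move=> P sP LP PN.
  case: (mn (ideal_sub P) (subalg_ideal sP)); try by apply/psub_ideal.
    by move=> h; left; apply/peq_ideal.
  by move=> h; right; apply/peq_ideal.
- case=> [[sub nq] mn]; split.
    split; first by apply/psub_ideal.
    by move=> h; apply: nq; apply/peq_ideal.
  move=> C sC LC CN; rewrite (subalg_eq sC).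
  case: (mn (Nof C) (subalg_Nof sC)).
  + by move=> m Lm; exact: (LC (0, m)).
  + by move=> m Cm; exact: (CN (0, m)).
  + by move=> h; left; apply/peq_ideal.
  + by move=> h; right; apply/peq_ideal.
Qed.

Lemma socle_ideal L :
  socle (@ideal_sub R M L) = ideal_sub (mod_loewy_step L).
Proof.
apply: peq_eq => x; split.
- move=> Hs P sP LP HN; apply: (Hs (ideal_sub P) (subalg_ideal sP)).
    by apply/psub_ideal.
  move=> A [sA [propA minA]].
  have eA := subalg_eq sA; have sN := subalg_Nof sA.
  move: propA minA; rewrite eA => propA minA.
  apply/psub_ideal; apply: HN => //.
    by case: propA => /psub_ideal.
  by apply/minimal_ideal.
- move=> Hx C sC LC HA; rewrite (subalg_eq sC); apply: Hx.
  + exact: subalg_Nof.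
  + by move=> m Lm; exact: (LC (0, m)).
  + move=> N sN LN sq m Nm.
    apply: (HA (ideal_sub N)) => //; split; first exact: subalg_ideal.
    by apply/minimal_ideal.
Qed.

Lemma ring_loewy_eq i : @ring_loewy R M i = ideal_sub (mod_loewy i).
Proof. by elim: i => [|i IH] //=; rewrite IH socle_ideal. Qed.

Lemma step_sub L : psub L (mod_loewy_step L).
Proof. by move=> x Lx P _ LP _; apply: LP. Qed.

Lemma step_submod L : submod (mod_loewy_step L).
Proof.
split.
- by move=> P [] h0.
- by move=> x y hx hy P sP LP HN; case: (sP) => _ hD _; apply: hD; [apply: hx|apply: hy].
- by move=> r x hx P sP LP HN; case: (sP) => _ _ hZ; apply: hZ; apply: hx.
Qed.

Lemma loewy_submod i : submod (@mod_loewy R M i).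
Proof.
case: i => [|i] /=; last exact: step_submod.
split => //.
- by move=> x y -> ->; rewrite addr0.
- by move=> r x ->; rewrite scaler0.
Qed.

Lemma key L N N' : submod L -> submod N' -> psub N L -> simple_quot N N' ->
  psub N' (mod_loewy_step L).
Proof.
move=> sL sN' NL [[NN' _] mn].
case: (sL) => L0 LD LZ; case: (sN') => N0 ND NZ.
pose Q : pset M := fun x => exists a b, N' a /\ L b /\ x = a + b.
have sQ : submod Q.
  split.
  - by exists 0, 0; rewrite addr0.
  - move=> x y [a [b [Na [Lb ->]]]] [a' [b' [Na' [Lb' ->]]]].
    exists (a + a'), (b + b'); split; [exact: ND|split; [exact: LD|]].
    by rewrite addrACA.
  - move=> r x [a [b [Na [Lb ->]]]]; exists (r *: a), (r *: b).
    by split; [exact: NZ|split; [exact: LZ|rewrite scalerDr]].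
have LQ : psub L Q by move=> b Lb; exists 0, b; rewrite add0r.
have N'Q : psub N' Q by move=> a Na; exists a, 0; rewrite addr0.
case: (classic (peq L Q)) => [h|nh].
  by move=> x hx; apply: step_sub; apply/(h x); apply: N'Q.
move=> x hx P sP LP HN; apply: (HN Q sQ LQ); last exact: N'Q.
split; first by split.
move=> P0 sP0 LP0 P0Q.
case: (sP0) => P00 P0D P0Z.
pose P' : pset M := fun x => P0 x /\ N' x.
have sP' : submod P'.
  split; first by split.
  - by move=> y z [? ?] [? ?]; split; [apply: P0D|apply: ND].
  - by move=> r y [? ?]; split; [apply: P0Z|apply: NZ].
case: (mn P' sP').
- by move=> y Ny; split; [apply: LP0; apply: NL|apply: NN'].
- by move=> y [].
- move=> h; left => y; split; last exact: LP0.
  move=> Py; case: (P0Q y Py) => a [b [Na [Lb ey]]].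
  have Pa : P0 a.
    have := P0D _ _ Py (P0Z (-1) _ (LP0 _ Lb)).
    by rewrite scaleN1r ey addrK.
  have := (h a).1 (conj Pa Na) => /NL La.
  by rewrite ey; apply: LD.
- move=> h; right => y; split; first exact: P0Q.
  case=> a [b [Na [Lb ->]]]; apply: P0D; last exact: LP0.
  by have := (h a).2 Na => -[].
Qed.

Lemma full_exists : finite_length M ->
  exists n, peq (@mod_loewy R M n) (fun _ => True).
Proof.
case=> k [Ns [h0 hk sNs hsq]].
have H : forall j, (j <= k)%N -> psub (Ns j) (mod_loewy j).
  elim=> [|j IH] hj.
    by move=> x /(h0 x).
  apply: (key (loewy_submod j) (sNs j.+1)).
  - by apply: IH; apply: ltnW.
  - exact: hsq.
exists k => x; split => // _; apply: (H k (leqnn k)); exact/(hk x).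
Qed.

End Proof.

Theorem proposition8p15 (R : comPzRingType) (M : lmodType R) :
  finite_length M ->
  exists n : nat,
    [/\ peq (@ring_loewy R M n) (fun _ => True),
        (forall k, (k < n)%N -> ~ peq (@ring_loewy R M k) (fun _ => True)),
        peq (@mod_loewy R M n) (fun _ => True),
        (forall k, (k < n)%N -> ~ peq (@mod_loewy R M k) (fun _ => True)) &
        (forall i, (i <= n)%N -> peq (@ring_loewy R M i) (ideal_sub (@mod_loewy R M i)))].
Proof.
move=> fl; case: (full_exists fl) => n0 Hn0.
case: (@least_aux (fun n => peq (@mod_loewy R M n) (fun _ => True)) n0 n0 (leqnn n0) Hn0)
  => n [Hn Hmin].
exists n; split => //.
- by rewrite ring_loewy_eq => x; split => // _; apply/(Hn x.2).
- move=> k kn h; apply: (Hmin k kn) => m; split => // _.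
  by move: (h (0, m)); rewrite ring_loewy_eq => -[_ H]; apply: H.
- by move=> i _; rewrite ring_loewy_eq.
Qed.
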